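(* Let $P$ be a span program and $x$ an input, and let $S,T$ be positive-definite diagonal $|J|\times|J|$ matrices. Then $$\mathrm{wsize}_{S\sqrt{1+T}}(P,x)\le\mathrm{wsize}_S(P,x)\,(1+\|T\|),\qquad \mathrm{wsize}_{\sqrt{S^2+T^2}}(P,x)\le\mathrm{wsize}_S(P,x)+O(\|T\|^2),$$ where the constant in $O(\cdot)$ depends only on $P$. In particular, fix input complexities $U_i$ with grouped input complexities $\tilde U_j$. Let $\tilde U'_j>0$ ($j\in J$) satisfy $\tilde U'_j\lesssim\tilde U_j$ for all $j$, and let $\tilde U'=\sum_j\tilde U'_j|j\rangle\langle j|$. Then $$\mathrm{wsize}_{\sqrt{\tilde U'}}(P,x)\lesssim\mathrm{wsize}_{\sqrt{\tilde U}}(P,x)=\mathrm{wsize}(P,x).$$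
   Context: A span program $P$ has target $t=(1,0,\dots,0)\in\mathbb{C}^m$ and vectors $v_j$ ($j\in J$) labeled by literal sets $X_j$. Grouped input $j$ is true on $x$ iff all literals in $X_j$ are true. We set $f_P(x)=1$ iff $t$ is in the span of the true $v_j$. Let $\Pi=\sum_{j\text{ true}}|j\rangle\langle j|$ and $A=\sum_j|v_j\rangle\langle j|$. For positive-definite diagonal $S$: - if $f_P(x)=1$, $\mathrm{wsize}_S(P,x)=\min\{\|Sw\|^2:A\Pi w=t\}$; - if $f_P(x)=0$, $\mathrm{wsize}_S(P,x)=\min\{\|SA^\dagger w'\|^2:\langle t|w'\rangle=1,\ \Pi A^\dagger w'=0\}$. Input complexities are positive reals $U_i$, one for each literal occurrence $i\in I_j$ of $X_j$. Grouped input complexities are - $\tilde U_j=\max\{\sum_{i\in I_j}U_i,1\}$ if $j$ is true; - $\tilde U_j=(\sum_{i\in I_j\text{ false}}U_i^{-1})^{-1}$ otherwise. Set $\tilde U=\sum_j\tilde U_j|j\rangle\langle j|$ and $\mathrm{wsize}(P,x)=\mathrm{wsize}_{\sqrt{\tilde U}}(P,x)$. Notation $a\lesssim b$, relative to a real parameter $\lambda$ and the complexities $U_i$: there exist constants $c_1,c_2$ such that $a\le c_1+b(1+c_2|\lambda|\max_iU_i)$. In the conclusion, the constants may depend on those in the hypothesis and on $P$. *)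

(* Defs.v *)
From HB Require Import structures.
From mathcomp Require Import all_boot all_order all_algebra.
From mathcomp Require Import boolp classical_sets reals.
From mathcomp.real_closed Require Import complex.

Set Implicit Arguments.
Unset Strict Implicit.
Unset Printing Implicit Defensive.

Import Order.TTheory GRing.Theory Num.Theory.
Local Open Scope ring_scope.

(* A literal over n Boolean input variables: (i, b) stands for "x_i = b",
   i.e. (i,true) is x_i and (i,false) is (not x_i). *)
Definition literal (n : nat) := ('I_n * bool)%type.

Definition lit_true (n : nat) (x : {ffun 'I_n -> bool}) (l : literal n) : bool :=
  x l.1 == l.2.

(* A span program with target space C^(m.+1), index set J = 'I_k,
   vectors v_j = column j of spA, labelled by literal sets spX j. *)
Record spanprog (R : realType) (n m k : nat) := SpanProg {
  spA : 'M[R[i]]_(m.+1, k);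
  spX : 'I_k -> {set literal n}
}.

Section SpanProgDefs.
Variables (R : realType) (n m k : nat) (P : spanprog R n m k).

Definition target : 'cV[R[i]]_(m.+1) := \col_(a < m.+1) (a == ord0)%:R.

Definition adjmx (p q : nat) (M : 'M[R[i]]_(p, q)) : 'M[R[i]]_(q, p) :=
  map_mx (@conjc R) M^T.

Definition jtrue (x : {ffun 'I_n -> bool}) (j : 'I_k) : bool :=
  [forall l in spX P j, lit_true x l].

Definition PiM (x : {ffun 'I_n -> bool}) : 'M[R[i]]_k :=
  diag_mx (\row_j (jtrue x j)%:R).

Definition fP (x : {ffun 'I_n -> bool}) : Prop :=
  exists w : 'cV[R[i]]_k, spA P *m PiM x *m w = target.

Definition sqn (z : R[i]) : R := complex.Re z ^+ 2 + complex.Im z ^+ 2.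

(* ||S w||^2 for S the positive diagonal matrix with diagonal s *)
Definition wnorm (s : 'I_k -> R) (w : 'cV[R[i]]_k) : R :=
  \sum_j s j ^+ 2 * sqn (w j ord0).

Definition pos_witness_sizes (x : {ffun 'I_n -> bool}) (s : 'I_k -> R) : set R :=
  [set r | exists w : 'cV[R[i]]_k, spA P *m PiM x *m w = target /\ r = wnorm s w].

Definition neg_witness_sizes (x : {ffun 'I_n -> bool}) (s : 'I_k -> R) : set R :=
  [set r | exists w' : 'cV[R[i]]_(m.+1),
     (adjmx target *m w') ord0 ord0 = 1 /\
     PiM x *m adjmx (spA P) *m w' = 0 /\
     r = wnorm s (adjmx (spA P) *m w')].

(* wsize_S(P,x), S = diag(s); the minimum is written as an infimum *)
Definition wsize (x : {ffun 'I_n -> bool}) (s : 'I_k -> R) : R :=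
  if `[< fP x >] then inf (pos_witness_sizes x s) else inf (neg_witness_sizes x s).

Definition diag_opnorm (t : 'I_k -> R) : R := \big[Num.max/0]_j `|t j|.

(* Input complexities: U j l for each literal occurrence l in X_j. *)
Definition grouped_cplx (x : {ffun 'I_n -> bool}) (U : 'I_k -> literal n -> R)
    (j : 'I_k) : R :=
  if jtrue x j then Num.max (\sum_(l in spX P j) U j l) 1
  else (\sum_(l in spX P j | ~~ lit_true x l) (U j l)^-1)^-1.

Definition maxU (U : 'I_k -> literal n -> R) : R :=
  \big[Num.max/0]_j \big[Num.max/0]_(l in spX P j) U j l.

Definition wsizeU (x : {ffun 'I_n -> bool}) (U : 'I_k -> literal n -> R) : R :=
  wsize x (fun j => Num.sqrt (grouped_cplx x U j)).

End SpanProgDefs.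

(* a <~ b relative to lambda and U, with explicit constants c1 c2:
   a <= c1 + b (1 + c2 |lambda| max_i U_i) *)
Definition lesssim_with (R : realType) (c1 c2 lam mU a b : R) : Prop :=
  a <= c1 + b * (1 + c2 * `|lam| * mU).

(* Main.v *)
Require Import Defs.
From HB Require Import structures.
From mathcomp Require Import all_boot all_order all_algebra.
From mathcomp Require Import boolp classical_sets reals.
From mathcomp.real_closed Require Import complex.
From mathcomp Require Import ring lra.
Import Order.TTheory GRing.Theory Num.Theory.
Local Open Scope ring_scope.

Lemma inf_cmp (R : realType) (A B : set R) (al be : R) :
  0 < al -> 0 <= be -> (forall r, A r -> 0 <= r) -> (forall r, B r -> 0 <= r) ->
  ((B !=set0)%classic -> (A !=set0)%classic) ->
  (forall r, A r -> exists2 r', B r' & r' <= al * r + be) ->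
  inf B <= al * inf A + be.
Proof.
move=> al0 be0 A0 B0 BA AB.
have [[r0 Ar0]|An] := pselect (A !=set0)%classic; last first.
  have -> : B = set0.
    apply/seteqP; split=> // r Br; exfalso; apply: An; apply: BA; by exists r.
  have -> : A = set0.
    apply/seteqP; split=> // r Ar; exfalso; apply: An; by exists r.
  by rewrite inf0 mulr0 add0r.
have hB : has_lbound B by exists 0 => r /B0.
have : (inf B - be) / al <= inf A.
  apply: lb_le_inf; first by exists r0.
  move=> r Ar; have [r' Br' le] := AB r Ar.
  have := ge_inf hB Br' => h.
  rewrite ler_pdivrMr // ; lra.
rewrite ler_pdivrMr //; lra.
Qed.
Section Abstract.
Variables (R : realType) (I : finType) (L : (I -> R) -> Prop).
Hypothesis affL : forall (y1 y2 : I -> R) (tau : R), L y1 -> L y2 ->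
  L (fun i => y1 i + tau * (y2 i - y1 i)).

Lemma fin_unif (T : finType) (Q : T -> R -> Prop) :
  (forall x c c', c <= c' -> Q x c -> Q x c') -> (forall x, exists c, Q x c) ->
  exists c, forall x, Q x c.
Proof.
move=> mono ex.
suff [c hc] : exists c, forall x, x \in enum T -> Q x c.
  by exists c => x; apply: hc; rewrite mem_enum.
elim: (enum T) => [|a s [c hc]]; first by exists 0.
have [ca hca] := ex a.
exists (Num.max c ca) => x; rewrite inE => /orP[/eqP->|xs].
  by apply: mono hca; rewrite le_max lexx orbT.
by apply: mono (hc x xs); rewrite le_max lexx.
Qed.

Lemma exmin (N : pred I) (r : I -> R) : (exists i, N i) ->
  exists i0, N i0 /\ forall i, N i -> r i0 <= r i.
Proof.
move=> [i Ni].
suff [i0 [_ [Ni0 h]]] : exists i0, i0 \in i :: enum I /\ N i0 /\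
    forall j, j \in i :: enum I -> N j -> r i0 <= r j.
  by exists i0; split=> // j Nj; apply: h => //; rewrite inE mem_enum orbT.
elim: (enum I) => [|a s [i0 [i0s [Ni0 h]]]].
  by exists i; split; [rewrite inE eqxx|split=> // j; rewrite inE => /eqP->].
case Na: (N a); last first.
  exists i0; split; first by move: i0s; rewrite !inE => /orP[->|->]; rewrite ?orbT.
  split=> // j; rewrite !inE => /orP[/eqP->|/orP[/eqP->|js]].
  - by apply: h; rewrite inE eqxx.
  - by rewrite Na.
  - by apply: h; rewrite inE js orbT.
case: (leP (r i0) (r a)) => ha.
  exists i0; split; first by move: i0s; rewrite !inE => /orP[->|->]; rewrite ?orbT.
  split=> // j; rewrite !inE => /orP[/eqP->|/orP[/eqP->|js]] Nj.
  - by apply: h; rewrite ?inE ?eqxx.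
  - by [].
  - by apply: h; rewrite ?inE ?js ?orbT.
exists a; split; first by rewrite !inE eqxx orbT.
split=> // j; rewrite !inE => /orP[/eqP->|/orP[/eqP->|js]] Nj.
- by apply: le_trans (ltW ha) _; apply: h; rewrite ?inE ?eqxx.
- by [].
- by apply: le_trans (ltW ha) _; apply: h; rewrite ?inE ?js ?orbT.
Qed.

Lemma step_help (y z tau : R) : z * y < 0 -> 0 <= tau -> tau <= - y / z ->
  0 <= (y + tau * z) * y.
Proof.
move=> zy t0 tq.
have z0 : z != 0 by apply/eqP=> z0; move: zy; rewrite z0 mul0r ltxx.
have qz : (- y / z) * z = - y by rewrite mulfVK.
have : tau * (z * y) >= (- y / z) * (z * y) by rewrite ler_wnM2r // ltW.
rewrite [- y / z * _]mulrA qz; nra.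
Qed.

Lemma step (y z : I -> R) (N : pred I) : (exists i, N i) ->
  (forall i, N i -> z i * y i < 0) ->
  exists tau, 0 <= tau /\ (exists i0, N i0 /\ y i0 + tau * z i0 = 0) /\
    forall i, N i -> 0 <= (y i + tau * z i) * y i.
Proof.
move=> exN hN.
have [i0 [Ni0 hmin]] := @exmin N (fun i => - y i / z i) exN.
have zi0 := hN i0 Ni0.
have z0 : z i0 != 0 by apply/eqP=> z0; move: zi0; rewrite z0 mul0r ltxx.
have t0 : 0 <= - y i0 / z i0.
  have -> : - y i0 / z i0 = - (z i0 * y i0) / (z i0 ^+ 2).
    by field.
  by rewrite divr_ge0 ?sqr_ge0 // oppr_ge0 ltW.
exists (- y i0 / z i0); split=> //; split.
  by exists i0; split=> //; rewrite mulfVK // subrr.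
by move=> i Ni; apply: step_help => //; [apply: hN | apply: hmin].
Qed.


Definition supp (y : I -> R) : {set I} := [set i | y i != 0].

Definition basic (v : I -> R) := L v /\
  forall v', L v' -> (forall i, v i = 0 -> v' i = 0) -> forall i, v' i = v i.

Definition norec (y : I -> R) := forall y2, L y2 -> (forall i, y i = 0 -> y2 i = 0) ->
  (forall i, 0 <= (y2 i - y i) * y i) -> forall i, y2 i = y i.

Lemma aff3 a b c : L a -> L b -> L c -> L (fun i => a i + b i - c i).
Proof.
move=> La Lb Lc.
have Lm := @affL _ _ (2^-1) La Lb.
have := @affL _ _ 2 Lc Lm.
have -> : (fun i => c i + 2 * (a i + 2^-1 * (b i - a i) - c i)) =
          (fun i => a i + b i - c i).
  by apply/funext => i; field.
by [].
Qed.

Lemma card_shrink (y yn : I -> R) i0 :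
  (forall i, y i = 0 -> yn i = 0) -> yn i0 = 0 -> y i0 != 0 ->
  (#|supp yn| < #|supp y|)%N.
Proof.
move=> h0 hi0 yi0.
have sub : supp yn \subset supp y :\ i0.
  apply/fintype.subsetP=> i; rewrite !inE => yni; apply/andP; split.
    by apply/eqP=> ei; move: yni; rewrite ei hi0 eqxx.
  by apply/eqP=> yz; move: yni; rewrite (h0 _ yz) eqxx.
have := subset_leq_card sub; rewrite (cardsD1 i0 (supp y)) inE yi0 add1n.
by [].
Qed.

Lemma abs_le_help (a b : R) : b != 0 -> 0 <= a * b -> a * b <= b * b -> `|a| <= `|b|.
Proof.
move=> b0 h1 h2.
have bp : 0 < `|b| by rewrite normr_gt0.
have bb : 0 <= b * b by rewrite -expr2 sqr_ge0.
have : `|a| * `|b| <= `|b| * `|b|.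
  by rewrite -!normrM (ger0_norm h1) (ger0_norm bb).
by rewrite ler_pM2r.
Qed.

Lemma reduce1 nn y : (#|supp y| <= nn)%N -> L y ->
  exists y0, L y0 /\ (forall i, `|y0 i| <= `|y i|) /\ norec y0.
Proof.
elim: nn y => [|nn IH] y hc Ly.
  exists y; split=> //; split=> // y2 Ly2 h0 _ i.
  have : supp y = finset.set0 by apply/eqP; rewrite -cards_eq0 -leqn0.
  move/setP/(_ i); rewrite !inE => /negbFE/eqP yi.
  by rewrite yi h0.
case: (pselect (exists y2, L y2 /\ (forall i, y i = 0 -> y2 i = 0) /\
   (forall i, 0 <= (y2 i - y i) * y i) /\ exists i, y2 i != y i)); last first.
  move=> nex; exists y; split=> //; split=> // y2 Ly2 h0 h1 i.
  apply/eqP; apply: contraT => ne; exfalso; apply: nex; exists y2.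
  by split=> //; split=> //; split=> //; exists i.
move=> [y2 [Ly2 [h0 [h1 [i1 ne]]]]].
pose z := fun i => y2 i - y i.
have hN : forall i, z i != 0 -> (- z i) * y i < 0.
  move=> i zi; have yi : y i != 0.
    by apply: contraNneq zi => yi0; rewrite /z yi0 (h0 _ yi0) subrr.
  have := h1 i; rewrite -/(z i) mulNr oppr_lt0 => h.
  by rewrite lt_def h andbT mulf_neq0.
have exN : exists i, z i != 0 by exists i1; rewrite /z subr_eq0.
have [tau [t0 [[i0 [Ni0 hi0]] hall]]] := @step y (fun i => - z i) (fun i => z i != 0) exN hN.
pose yn := fun i => y i + (- tau) * (y2 i - y i).
have Lyn : L yn by apply: affL.
have ynE : forall i, yn i = y i + tau * (- z i) by move=> i; rewrite /yn /z; ring.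
have hlt : (#|supp yn| < #|supp y|)%N.
  apply: (@card_shrink _ _ i0).
  - by move=> i yi0; rewrite ynE /z yi0 (h0 _ yi0); ring.
  - by rewrite ynE.
  - by apply: contraNneq Ni0 => yi0; rewrite /z yi0 (h0 _ yi0) subrr.
have [y0 [Ly0 [hy0 nr]]] := IH yn (leq_trans (ltnSn _) (leq_trans hlt hc)) Lyn.
exists y0; split=> //; split=> // i; apply: le_trans (hy0 i) _.
case: (eqVneq (z i) 0) => zi.
  by rewrite ynE zi oppr0 mulr0 addr0.
have yi : y i != 0.
  by apply: contraNneq zi => yi0; rewrite /z yi0 (h0 _ yi0) subrr.
apply: abs_le_help => //; first by rewrite ynE; apply: hall.
have := h1 i; rewrite ynE -/(z i) => h; nra.
Qed.

Definition inQ (y' y : I -> R) := L y /\ (forall i, 0 <= y i * y' i) /\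
  (forall i, y' i = 0 -> y i = 0).

Lemma phase2 y' (eps : R) j : norec y' -> L y' ->
  forall nn y, (#|supp y| <= nn)%N -> inQ y' y ->
  exists v, basic v /\ eps * y j <= eps * v j.
Proof.
move=> nr Ly'; elim=> [|nn IH] y hc [Ly [hs hz]].
  exists y; split=> //; split=> // v' Lv' h0 i.
  have : supp y = finset.set0 by apply/eqP; rewrite -cards_eq0 -leqn0.
  move/setP/(_ i); rewrite !inE => /negbFE/eqP yi.
  by rewrite yi h0.
case: (pselect (basic y)) => [bY|nb]; first by exists y.
have [y2 [Ly2 [h0 [[i1 ne] he]]]] : exists y2, L y2 /\ (forall i, y i = 0 -> y2 i = 0) /\
    (exists i, y2 i != y i) /\ 0 <= eps * (y2 j - y j).
  case: (pselect (exists y2, L y2 /\ (forall i, y i = 0 -> y2 i = 0) /\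
      exists i, y2 i != y i)); last first.
    move=> nex; exfalso; apply: nb; split=> // v' Lv' h0 i.
    apply/eqP; apply: contraT => ne; exfalso; apply: nex; exists v'.
    by split=> //; split=> //; exists i.
  move=> [y2 [Ly2 [h0 [i1 ne]]]].
  case: (lerP 0 (eps * (y2 j - y j))) => he.
    by exists y2; split=> //; split=> //; split=> //; exists i1.
  exists (fun i => y i + (-1) * (y2 i - y i)); split; first by apply: affL.
  split; first by move=> i yi0; rewrite yi0 (h0 _ yi0); ring.
  split; last by nra.
  by exists i1; apply: contra ne => /eqP h; apply/eqP; lra.
pose z := fun i => y2 i - y i.
have zy : forall i, z i != 0 -> y i != 0.
  by move=> i; apply: contraNneq => yi0; rewrite /z yi0 (h0 _ yi0) subrr.
have exN : exists i, z i * y' i < 0.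
  case: (pselect (exists i, z i * y' i < 0)) => // nex; exfalso.
  have L3 := @aff3 _ _ _ Ly' Ly2 Ly.
  have := nr _ L3.
  have c1 : forall i, y' i = 0 -> y' i + y2 i - y i = 0.
    by move=> i yi0; rewrite yi0 (h0 _ (hz _ yi0)) (hz _ yi0); ring.
  have c2 : forall i, 0 <= (y' i + y2 i - y i - y' i) * y' i.
    move=> i; rewrite leNgt; apply/negP => hlt; apply: nex; exists i.
    by move: hlt; rewrite /z; congr (_ < _); ring.
  move=> /(_ c1 c2 i1) => e; move/eqP: ne; apply; lra.
have hN : forall i, z i * y' i < 0 -> z i * y i < 0.
  move=> i hi.
  have zi : z i != 0 by apply/eqP => zi; move: hi; rewrite zi mul0r ltxx.
  have yi := zy i zi.
  have y'i : y' i != 0 by apply/eqP => e; move: hi; rewrite e mulr0 ltxx.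
  have yy : 0 < y i * y' i by rewrite lt_def mulf_neq0 ?hs.
  have sq : 0 < y' i ^+ 2 by rewrite lt_def sqrf_eq0 y'i sqr_ge0.
  have : (z i * y i) * (y' i ^+ 2) < 0.
    have -> : (z i * y i) * (y' i ^+ 2) = (z i * y' i) * (y i * y' i) by ring.
    by rewrite pmulr_llt0.
  by rewrite pmulr_llt0.
have [tau [t0 [[i0 [Ni0 hi0]] hall]]] := @step y z (fun i => z i * y' i < 0) exN hN.
pose yn := fun i => y i + tau * (y2 i - y i).
have Lyn : L yn by apply: affL.
have hlt : (#|supp yn| < #|supp y|)%N.
  apply: (@card_shrink _ _ i0).
  - by move=> i yi0; rewrite /yn yi0 (h0 _ yi0); ring.
  - by rewrite /yn.
  - by apply: zy; apply/eqP => zi; move: Ni0; rewrite zi mul0r ltxx.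
have Qn : inQ y' yn.
  split=> //; split; last first.
    by move=> i yi0; rewrite /yn (hz _ yi0) (h0 _ (hz _ yi0)); ring.
  move=> i; case: (ltP (z i * y' i) 0) => hi; last first.
    rewrite /yn mulrDl -mulrA; apply: addr_ge0 => //; exact: mulr_ge0.
  have h1 := hall i hi; rewrite -/(z i) in h1.
  have zi : z i != 0 by apply/eqP => zz; move: hi; rewrite zz mul0r ltxx.
  have yi := zy i zi.
  have y'i : y' i != 0 by apply/eqP => e; move: hi; rewrite e mulr0 ltxx.
  have yy : 0 < y i * y' i by rewrite lt_def mulf_neq0 ?hs.
  have : 0 <= (yn i * y' i) * (y i * y' i).
    have -> : (yn i * y' i) * (y i * y' i) = ((y i + tau * z i) * y i) * (y' i ^+ 2).
      by rewrite /yn /z; ring.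
    by rewrite mulr_ge0 ?sqr_ge0.
  by rewrite pmulr_lge0.
have [v [bv hv]] := IH yn (leq_trans (ltnSn _) (leq_trans hlt hc)) Qn.
exists v; split=> //; apply: le_trans hv.
by rewrite /yn mulrDr lerDl mulrCA mulr_ge0.
Qed.

Lemma basic_bound : exists M, forall v, basic v -> forall i, `|v i| <= M.
Proof.
have [M hM] : exists M, forall S v, basic v -> supp v = S -> forall i, `|v i| <= M.
  apply: (@fin_unif {set I}
  (fun S M => forall v, basic v -> supp v = S -> forall i, `|v i| <= M)).
- by move=> S c c' le h v bv sv i; apply: le_trans (h v bv sv i) le.
- move=> S; case: (pselect (exists v, basic v /\ supp v = S)); last first.
    move=> nex; exists 0 => v bv sv; exfalso; apply: nex; by exists v.
  move=> [v0 [bv0 sv0]]; exists (\sum_i `|v0 i|) => v bv sv i.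
  have e : v i = v0 i.
    apply: (bv0.2 v bv.1) => l vl.
    have : l \notin supp v by rewrite sv -sv0 inE vl eqxx.
    by rewrite inE negbK => /eqP.
  by rewrite e (bigD1 i) //= lerDl sumr_ge0.
by exists M => v bv i; apply: (hM (supp v)).
Qed.

Lemma key : exists M, forall y, L y -> exists y0, L y0 /\
  forall i, `|y0 i| <= `|y i| /\ `|y0 i| <= M.
Proof.
have [M hM] := basic_bound.
exists M => y Ly.
have [y0 [Ly0 [hle nr]]] := @reduce1 _ _ (leqnn _) Ly.
exists y0; split=> // i; split=> //.
pose eps : R := if 0 <= y0 i then 1 else -1.
have Q0 : inQ y0 y0.
  by split=> //; split=> // l; rewrite -expr2 sqr_ge0.
have [v [bv hv]] := @phase2 y0 eps i nr Ly0 _ _ (leqnn _) Q0.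
apply: le_trans (hM v bv i).
rewrite /eps in hv; case: ifP hv => h hv.
  by rewrite !mul1r in hv; rewrite ger0_norm //; apply: le_trans hv (ler_norm _).
rewrite !mulN1r in hv; rewrite ltr0_norm ?ltNge ?h //.
by apply: le_trans hv _; rewrite -normrN ler_norm.
Qed.

End Abstract.
Definition rf (R : realType) k (w : 'cV[R[i]]_k) : 'I_k * bool -> R :=
  fun p => if p.2 then complex.Im (w p.1 ord0) else complex.Re (w p.1 ord0).

Arguments rf {R k}.

Lemma rf_aff (R : realType) k (u1 u2 : 'cV[R[i]]_k) (tau : R) p :
  rf (u1 + (tau%:C)%C *: (u2 - u1)) p = rf u1 p + tau * (rf u2 p - rf u1 p).
Proof.
rewrite /rf !mxE.
case: (u1 _ _) => a b; case: (u2 _ _) => c d; case: p.2 => /=; ring.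
Qed.

Lemma sq_le_norm (R : realType) (a b : R) : `|a| <= `|b| -> a ^+ 2 <= b ^+ 2.
Proof.
move=> h; have := ler_pM (normr_ge0 a) (normr_ge0 a) h h.
by rewrite -!normrM !ger0_norm ?expr2 // -expr2 sqr_ge0.
Qed.

Lemma sqn_ge0 (R : realType) (z : R[i]) : 0 <= sqn z.
Proof. by rewrite /sqn addr_ge0 ?sqr_ge0. Qed.

Arguments sqn_ge0 {R}.
Arguments sq_le_norm {R}.

Section Gen.
Variables (R : realType) (k q : nat) (Cset : 'cV[R[i]]_q -> Prop)
  (g : 'cV[R[i]]_q -> 'cV[R[i]]_k).
Hypothesis affC : forall w1 w2 (tau : R), Cset w1 -> Cset w2 ->
  Cset (w1 + (tau%:C)%C *: (w2 - w1)).
Hypothesis affg : forall w1 w2 (tau : R),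
  g (w1 + (tau%:C)%C *: (w2 - w1)) = g w1 + (tau%:C)%C *: (g w2 - g w1).

Definition Lgen (y : 'I_k * bool -> R) := exists w, Cset w /\ forall p, y p = rf (g w) p.

Lemma affLgen (y1 y2 : 'I_k * bool -> R) (tau : R) : Lgen y1 -> Lgen y2 ->
  Lgen (fun i => y1 i + tau * (y2 i - y1 i)).
Proof.
move=> [w1 [C1 e1]] [w2 [C2 e2]]; exists (w1 + (tau%:C)%C *: (w2 - w1)).
by split; [exact: affC | move=> p; rewrite affg rf_aff e1 e2].
Qed.

Lemma sqn_rf (w : 'cV[R[i]]_k) j : sqn (w j ord0) = rf w (j, false) ^+ 2 + rf w (j, true) ^+ 2.
Proof. by []. Qed.

Lemma red : exists B, 0 <= B /\ forall w, Cset w -> exists w0, Cset w0 /\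
  forall j, sqn (g w0 j ord0) <= sqn (g w j ord0) /\ sqn (g w0 j ord0) <= B.
Proof.
have [M hM] := @key R _ Lgen affLgen.
exists (2 * M ^+ 2); split; first by rewrite mulr_ge0 ?sqr_ge0.
move=> w Cw.
have [y0 [[w0 [Cw0 e0]] h]] := hM (rf (g w)) (ex_intro _ w (conj Cw (fun p => erefl))).
exists w0; split=> // j.
rewrite !sqn_rf -!e0; split.
  by apply: lerD; apply: sq_le_norm; [case: (h (j, false)) | case: (h (j, true))].
have hb : forall p, y0 p ^+ 2 <= M ^+ 2.
  move=> p; have [_ hp] := h p; apply: sq_le_norm.
  by rewrite (ger0_norm (le_trans (normr_ge0 _) hp)).
by have := hb (j, false); have := hb (j, true); lra.
Qed.

Lemma genCOMP : exists C, 0 <= C /\ forall (s s' : 'I_k -> R) (al be : R) (A B : set R),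
  (forall r, A r <-> exists w, Cset w /\ r = wnorm s (g w)) ->
  (forall r, B r <-> exists w, Cset w /\ r = wnorm s' (g w)) ->
  0 < al -> 0 <= be -> (forall j, s' j ^+ 2 <= al * s j ^+ 2 + be) ->
  inf B <= al * inf A + be * C.
Proof.
have [Bd [Bd0 hred]] := red.
exists (\sum_(j < k) Bd); split; first by rewrite sumr_ge0.
move=> s s' al be A B hA hB al0 be0 hs.
have wn0 : forall (s : 'I_k -> R) w, 0 <= wnorm s w.
  by move=> s1 w; rewrite /wnorm sumr_ge0 // => j _; rewrite mulr_ge0 ?sqr_ge0 ?sqn_ge0.
apply: inf_cmp.
- by [].
- by rewrite mulr_ge0 // sumr_ge0.
- by move=> r /hA [w [_ ->]].
- by move=> r /hB [w [_ ->]].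
- move=> [r /hB [w [Cw _]]]; exists (wnorm s (g w)); apply/(hA _); by exists w.
move=> r /hA [w [Cw ->]].
have [w0 [Cw0 h0]] := hred w Cw.
exists (wnorm s' (g w0)); first by apply/(hB _); exists w0.
rewrite /wnorm mulr_sumr mulr_sumr -big_split; apply: ler_sum => j _ /=.
have [h1 h2] := h0 j; have hsj := hs j; have hq0 := sqn_ge0 (g w0 j ord0).
have ha := sqr_ge0 (s j); have ha' := sqr_ge0 (s' j).
have e1 : s' j ^+ 2 * sqn (g w0 j ord0) <= (al * s j ^+ 2 + be) * sqn (g w0 j ord0).
  by rewrite ler_wpM2r.
apply: le_trans e1 _.
have aa : 0 <= al * s j ^+ 2 by rewrite mulr_ge0 // ltW.
move: h1 h2 hq0 aa be0; set q0 := sqn (g w0 j ord0); set q1 := sqn (g w j ord0).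
set a := s j ^+ 2 => h1 h2 hq0 aa be0.
rewrite mulrA; nra.
Qed.

End Gen.

Lemma bigmax_ge (R : realType) (I : finType) (F : I -> R) (x0 : R) i :
  F i <= \big[Num.max/x0]_j F j.
Proof. by rewrite (bigD1 i) //= le_max lexx. Qed.

Lemma bigmax_ge0 (R : realType) (I : finType) (P : pred I) (F : I -> R) (x0 : R) :
  0 <= x0 -> 0 <= \big[Num.max/x0]_(j | P j) F j.
Proof.
move=> h; elim/big_rec: _ => // i y _ hy.
by rewrite le_max hy orbT.
Qed.

Section Concrete.
Variables (R : realType) (n m k : nat) (P : spanprog R n m k).

Lemma compx (x : {ffun 'I_n -> bool}) : exists C, forall (s s' : 'I_k -> R) (al be : R),
  0 < al -> 0 <= be -> (forall j, s' j ^+ 2 <= al * s j ^+ 2 + be) ->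
  wsize P x s' <= al * wsize P x s + be * C.
Proof.
pose Cp_ := fun w : 'cV[R[i]]_k => spA P *m PiM P x *m w = target R m.
have a1 : forall w1 w2 (tau : R), Cp_ w1 -> Cp_ w2 -> Cp_ (w1 + (tau%:C)%C *: (w2 - w1)).
  move=> w1 w2 tau h1 h2; rewrite /Cp_ in h1 h2 *.
  by rewrite mulmxDr -scalemxAr mulmxBr h1 h2 subrr scaler0 addr0.
have [Cp [Cp0 hp]] := @genCOMP R k k Cp_ (fun w => w) a1 (fun _ _ _ => erefl).
pose Cn_ := fun w : 'cV[R[i]]_m.+1 => (adjmx (target R m) *m w) ord0 ord0 = 1 /\ PiM P x *m adjmx (spA P) *m w = 0.
have a2 : forall w1 w2 (tau : R), Cn_ w1 -> Cn_ w2 -> Cn_ (w1 + (tau%:C)%C *: (w2 - w1)).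
  move=> w1 w2 tau [h1 h1'] [h2 h2']; split.
    rewrite mulmxDr -scalemxAr mulmxBr.
    move: h1 h2; rewrite !mxE => h1 h2.
    by rewrite h1 h2 subrr mulr0 addr0.
  by rewrite mulmxDr -scalemxAr mulmxBr h1' h2' subrr scaler0 addr0.
have a3 : forall (w1 w2 : 'cV[R[i]]_m.+1) (tau : R), adjmx (spA P) *m (w1 + (tau%:C)%C *: (w2 - w1)) =
    adjmx (spA P) *m w1 + (tau%:C)%C *: (adjmx (spA P) *m w2 - adjmx (spA P) *m w1).
  by move=> w1 w2 tau; rewrite mulmxDr -scalemxAr mulmxBr.
have [Cn [Cn0 hn]] := @genCOMP R k m.+1 Cn_ (fun w => adjmx (spA P) *m w) a2 a3.
exists (Cp + Cn) => s s' al be al0 be0 hs.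
rewrite /wsize; case: ifP => _.
  have hA : forall r, pos_witness_sizes P x s r <-> exists w, Cp_ w /\ r = wnorm s w.
    by move=> r; split.
  have hB : forall r, pos_witness_sizes P x s' r <-> exists w, Cp_ w /\ r = wnorm s' w.
    by move=> r; split.
  apply: le_trans (hp s s' al be _ _ hA hB al0 be0 hs) _.
  by rewrite lerD2l ler_wpM2l // lerDl.
have hA : forall r, neg_witness_sizes P x s r <-> exists w, Cn_ w /\ r = wnorm s (adjmx (spA P) *m w).
  by move=> r; split; [case=> w [h1 [h2 ->]]; exists w | case=> w [[h1 h2] ->]; exists w].
have hB : forall r, neg_witness_sizes P x s' r <-> exists w, Cn_ w /\ r = wnorm s' (adjmx (spA P) *m w).
  by move=> r; split; [case=> w [h1 [h2 ->]]; exists w | case=> w [[h1 h2] ->]; exists w].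
apply: le_trans (hn s s' al be _ _ hA hB al0 be0 hs) _.
by rewrite lerD2l ler_wpM2l // lerDr.
Qed.

Lemma compall : exists C, forall (x : {ffun 'I_n -> bool}) (s s' : 'I_k -> R) (al be : R),
  0 < al -> 0 <= be -> (forall j, s' j ^+ 2 <= al * s j ^+ 2 + be) ->
  wsize P x s' <= al * wsize P x s + be * C.
Proof.
have mono : forall (x : {ffun 'I_n -> bool}) (c c' : R), c <= c' ->
  (forall (s s' : 'I_k -> R) (al be : R),
  0 < al -> 0 <= be -> (forall j, s' j ^+ 2 <= al * s j ^+ 2 + be) ->
  wsize P x s' <= al * wsize P x s + be * c) ->
  (forall (s s' : 'I_k -> R) (al be : R),
  0 < al -> 0 <= be -> (forall j, s' j ^+ 2 <= al * s j ^+ 2 + be) ->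
  wsize P x s' <= al * wsize P x s + be * c').
  move=> x c c' le h s s' al be al0 be0 hs; apply: le_trans (h s s' al be al0 be0 hs) _.
  by rewrite lerD2l ler_wpM2l.
have [C hC] := @fin_unif R {ffun 'I_n -> bool} _ mono compx.
by exists C.
Qed.

End Concrete.

Theorem lemmaA6 (R : realType) (n m k : nat) (P : spanprog R n m k) :
  (* first inequality *)
  (forall (x : {ffun 'I_n -> bool}) (s t : 'I_k -> R),
      (forall j, 0 < s j) -> (forall j, 0 < t j) ->
      wsize P x (fun j => s j * Num.sqrt (1 + t j))
        <= wsize P x s * (1 + diag_opnorm t)) /\
  (* second inequality, constant depending only on P *)
  (exists c : R, forall (x : {ffun 'I_n -> bool}) (s t : 'I_k -> R),
      (forall j, 0 < s j) -> (forall j, 0 < t j) ->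
      wsize P x (fun j => Num.sqrt (s j ^+ 2 + t j ^+ 2))
        <= wsize P x s + c * diag_opnorm t ^+ 2) /\
  (* the "in particular" consequence *)
  (forall c1 c2 : R, exists c1' c2' : R,
    forall (x : {ffun 'I_n -> bool}) (U : 'I_k -> literal n -> R) (lam : R)
           (U' : 'I_k -> R),
      (forall j l, l \in spX P j -> 0 < U j l) ->
      (forall j, 0 < U' j) ->
      (forall j, lesssim_with c1 c2 lam (maxU P U) (U' j) (grouped_cplx P x U j)) ->
      lesssim_with c1' c2' lam (maxU P U)
        (wsize P x (fun j => Num.sqrt (U' j))) (wsizeU P x U)).
Proof.
have [C hC] := @compall R n m k P.
have T0 : forall t : 'I_k -> R, 0 <= diag_opnorm t.
  by move=> t; rewrite /diag_opnorm; apply: bigmax_ge0.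
have Tt : forall (t : 'I_k -> R) j, `|t j| <= diag_opnorm t.
  by move=> t j; rewrite /diag_opnorm; apply: (@bigmax_ge _ _ (fun j => `|t j|) 0 j).
split.
  move=> x s t hs ht.
  have := hC x s (fun j => s j * Num.sqrt (1 + t j)) (1 + diag_opnorm t) 0.
  rewrite mul0r addr0 mulrC; apply.
  - by have := T0 t; lra.
  - by [].
  move=> j; rewrite addr0 exprMn sqr_sqrtr; last by have := ht j; lra.
  rewrite mulrC ler_wpM2r ?sqr_ge0 // lerD2l.
  by apply: le_trans (Tt t j); apply: ler_norm.
split.
  exists C => x s t hs ht.
  have := hC x s (fun j => Num.sqrt (s j ^+ 2 + t j ^+ 2)) 1 (diag_opnorm t ^+ 2).
  rewrite mul1r mulrC; apply => //; first by rewrite sqr_ge0.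
  move=> j; rewrite sqr_sqrtr ?addr_ge0 ?sqr_ge0 // mul1r lerD2l.
  by apply: sq_le_norm; rewrite (ger0_norm (T0 t)).
move=> c1 c2.
exists (Num.max c1 0 * C), (Num.max c2 0) => x U lam U' hU hU' hle.
rewrite /lesssim_with /wsizeU.
have mU0 : 0 <= maxU P U.
  by rewrite /maxU; apply: bigmax_ge0.
have c20 : 0 <= Num.max c2 0 by rewrite le_max lexx orbT.
have c10 : 0 <= Num.max c1 0 by rewrite le_max lexx orbT.
have al0 : 0 < 1 + Num.max c2 0 * `|lam| * maxU P U.
  have : 0 <= Num.max c2 0 * `|lam| * maxU P U by rewrite !mulr_ge0.
  lra.
have := hC x (fun j => Num.sqrt (grouped_cplx P x U j)) (fun j => Num.sqrt (U' j))
  _ _ al0 c10.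
move=> h.
suff hs : forall j, Num.sqrt (U' j) ^+ 2 <= (1 + Num.max c2 0 * `|lam| * maxU P U) *
    Num.sqrt (grouped_cplx P x U j) ^+ 2 + Num.max c1 0.
  by apply: le_trans (h hs) _; rewrite addrC [wsize _ _ _ * _]mulrC.
move=> j; have g0 : 0 <= grouped_cplx P x U j.
  rewrite /grouped_cplx; case: ifP => _; first by rewrite le_max ler01 orbT.
  rewrite invr_ge0 sumr_ge0 // => l /andP[lX _].
  by rewrite invr_ge0 ltW // hU.
rewrite (sqr_sqrtr g0) (sqr_sqrtr (ltW (hU' j))).
have := hle j; rewrite /lesssim_with => hj.
have e : c2 * `|lam| * maxU P U <= Num.max c2 0 * `|lam| * maxU P U.
  by rewrite ler_wpM2r // ler_wpM2r // le_max lexx.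
have e2 : grouped_cplx P x U j * (1 + c2 * `|lam| * maxU P U) <=
          grouped_cplx P x U j * (1 + Num.max c2 0 * `|lam| * maxU P U).
  by rewrite ler_wpM2l // lerD2l.
have e3 : c1 <= Num.max c1 0 by rewrite le_max lexx.
apply: le_trans hj _; rewrite [c1 + _]addrC; apply: lerD => //.
by rewrite [X in _ <= X]mulrC; exact: e2.
Qed.
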